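(* Let $f:\mathbb{R}^n\to\mathbb{R}$ be a continuous convex function, $X_0\in\mathbb{R}^n$ and $R>0$, and let $B(X_0,R)$ be the open ball centered at $X_0$ of radius $R$. Suppose there exists $\underline{d}>0$ such that for all $X\in B(X_0,R)$ and all $d_X\in\partial f(X)$ one has $\|d_X\|\ge \underline{d}$. Then there exist $X\in B(X_0,R)$ and $d_X\in\partial f(X)$ such that $$X-X_0=-\frac{R}{2}\cdot\frac{d_X}{\|d_X\|}.$$
   Context: $\partial f(X)$ denotes the subdifferential (set of subgradients) of the convex function $f$ at $X$. *)

(* Defs.v *)
From HB Require Import structures.
From mathcomp Require Import all_boot all_order all_algebra.
From mathcomp Require Import all_classical all_reals all_analysis.
Set Implicit Arguments. Unset Strict Implicit. Unset Printing Implicit Defensive.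
Import Order.TTheory GRing.Theory Num.Theory.
Import numFieldTopology.Exports.
Local Open Scope ring_scope.

Definition dotv (R : realType) (n : nat) (u v : 'rV[R]_n) : R :=
  \sum_(i < n) u ord0 i * v ord0 i.

Definition enorm (R : realType) (n : nat) (u : 'rV[R]_n) : R :=
  Num.sqrt (dotv u u).

Definition in_open_ball (R : realType) (n : nat) (X0 : 'rV[R]_n) (r : R)
  (X : 'rV[R]_n) : Prop := enorm (X - X0) < r.

Definition convex_fun (R : realType) (n : nat) (f : 'rV[R]_n -> R) : Prop :=
  forall (x y : 'rV[R]_n) (t : R), 0 <= t -> t <= 1 ->
    f (t *: x + (1 - t) *: y) <= t * f x + (1 - t) * f y.

Definition subgradient (R : realType) (n : nat) (f : 'rV[R]_n -> R)
  (X d : 'rV[R]_n) : Prop :=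
  forall Y : 'rV[R]_n, f X + dotv d (Y - X) <= f Y.

(* Main.v *)
Require Import Defs.
From HB Require Import structures.
From mathcomp Require Import all_boot all_order all_algebra.
From mathcomp Require Import all_classical all_reals all_analysis.
From mathcomp Require Import ring lra.
Import Order.TTheory GRing.Theory Num.Theory.
Import numFieldTopology.Exports.
Local Open Scope ring_scope.

Section Alg.
Variables (R : realType) (n : nat).
Implicit Types (u v w : 'rV[R]_n) (a : R).

Lemma dotvC u v : dotv u v = dotv v u.
Proof. by rewrite /dotv; apply: eq_bigr => i _; rewrite mulrC. Qed.

Lemma dotvDl u v w : dotv (u + v) w = dotv u w + dotv v w.
Proof. by rewrite /dotv -big_split; apply: eq_bigr => i _; rewrite !mxE mulrDl. Qed.

Lemma dotvZl a u w : dotv (a *: u) w = a * dotv u w.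
Proof. by rewrite /dotv mulr_sumr; apply: eq_bigr => i _; rewrite !mxE mulrA. Qed.

Lemma dotvNl u w : dotv (- u) w = - dotv u w.
Proof. by rewrite -scaleN1r dotvZl mulN1r. Qed.

Lemma dotvBl u v w : dotv (u - v) w = dotv u w - dotv v w.
Proof. by rewrite dotvDl dotvNl. Qed.

Lemma dotvDr u v w : dotv w (u + v) = dotv w u + dotv w v.
Proof. by rewrite dotvC dotvDl !(dotvC w). Qed.

Lemma dotvZr a u w : dotv w (a *: u) = a * dotv w u.
Proof. by rewrite dotvC dotvZl dotvC. Qed.

Lemma dotvNr u w : dotv w (- u) = - dotv w u.
Proof. by rewrite dotvC dotvNl dotvC. Qed.

Lemma dotvBr u v w : dotv w (u - v) = dotv w u - dotv w v.
Proof. by rewrite dotvDr dotvNr. Qed.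

Lemma dotv_ge0 u : 0 <= dotv u u.
Proof. by rewrite /dotv; apply: sumr_ge0 => i _; rewrite -expr2 sqr_ge0. Qed.

Lemma dotv_coord u i : u ord0 i ^+ 2 <= dotv u u.
Proof.
rewrite /dotv (bigD1 i) //= -expr2 lerDl; apply: sumr_ge0 => j _.
by rewrite -expr2 sqr_ge0.
Qed.

Lemma dotv_sq u v : dotv (u + v) (u + v) = dotv u u + 2 * dotv u v + dotv v v.
Proof. rewrite !dotvDl !dotvDr (dotvC v u); ring. Qed.

Lemma dotv_cs a u v : 0 < a -> 2 * dotv u v <= a * dotv u u + a^-1 * dotv v v.
Proof.
move=> a0; have := dotv_ge0 (a *: u - v).
rewrite dotvBl !dotvBr !dotvZl !dotvZr (dotvC v u) => H.
have : 0 <= a^-1 * (a * (a * dotv u u) - a * dotv u v - (a * dotv u v - dotv v v)).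
  by apply: mulr_ge0 => //; rewrite invr_ge0 ltW.
have ha : a != 0 by rewrite gt_eqF.
rewrite !mulrBr !mulrA mulVf // !mul1r. lra.
Qed.

Lemma dotv_csN a u v : 0 < a -> - (2 * dotv u v) <= a * dotv u u + a^-1 * dotv v v.
Proof. by move=> a0; have := dotv_cs a u (- v) a0; rewrite dotvNr dotvNl dotvNr opprK mulrN. Qed.

Lemma enorm_dotv u : enorm u = Num.sqrt (dotv u u).
Proof. by []. Qed.

Lemma enormZ a u : enorm (a *: u) = `|a| * enorm u.
Proof.
by rewrite /enorm dotvZl dotvZr mulrA -expr2 sqrtrM ?sqr_ge0 // sqrtr_sqr.
Qed.

Lemma dotvNN u : dotv (- u) (- u) = dotv u u.
Proof. by rewrite dotvNl dotvNr opprK. Qed.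

End Alg.
Arguments dotvC {R n}.
Arguments dotvDl {R n}.
Arguments dotvZl {R n}.
Arguments dotvNl {R n}.
Arguments dotvBl {R n}.
Arguments dotvDr {R n}.
Arguments dotvZr {R n}.
Arguments dotvNr {R n}.
Arguments dotvBr {R n}.
Arguments dotv_ge0 {R n}.
Arguments dotv_coord {R n}.
Arguments dotv_sq {R n}.
Arguments dotv_cs {R n}.
Arguments dotv_csN {R n}.
Arguments enorm_dotv {R n}.
Arguments enormZ {R n}.
Arguments dotvNN {R n}.
Local Open Scope classical_set_scope.

Section Top.
Variables (R : realType) (n : nat).

Lemma dotv_continuous (X0 : 'rV[R]_n) :
  continuous (fun Y : 'rV[R]_n => dotv (Y - X0) (Y - X0)).
Proof.
rewrite /dotv; elim: (index_enum _) => [|i s IH].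
  by under eq_fun do rewrite big_nil; exact: cst_continuous.
under eq_fun do rewrite big_cons.
have ci : continuous (fun Z : 'rV[R]_n => (Z - X0) ord0 i).
  move=> Z; apply: (@continuous_comp _ _ _ (fun Z : 'rV[R]_n => Z - X0) (fun M : 'rV[R]_n => M ord0 i)).
    exact: (@continuousB R _ _ (fun Z : 'rV[R]_n => Z) (fun=> X0) Z cvg_id (@cst_continuous _ _ X0 Z)).
  exact: coord_continuous.
move=> Y.
exact: (@continuousD R R^o _ (fun Z : 'rV[R]_n => (Z - X0) ord0 i * (Z - X0) ord0 i)
  (fun Z : 'rV[R]_n => \sum_(i <- s) (Z - X0) ord0 i * (Z - X0) ord0 i) Y
  (continuousM (ci Y) (ci Y)) (IH Y)).
Qed.

Lemma ballK_compact (X0 : 'rV[R]_n) (c : R) :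
  compact [set Y : 'rV[R]_n | dotv (Y - X0) (Y - X0) <= c].
Proof.
apply: bounded_closed_compact; last first.
  apply: (@preimage_closed _ _ (fun Y : 'rV[R]_n => dotv (Y - X0) (Y - X0)) [set x | x <= c]).
    by move=> x _; exact: dotv_continuous.
  exact: closed_le.
rewrite /bounded_near /=; near=> M => Y /= HY.
have HM : `|X0| + Num.sqrt `|c| <= M by near: M; apply: nbhs_pinfty_ge; rewrite num_real.
apply: le_trans HM.
have -> : Y = (Y - X0) + X0 by rewrite subrK.
apply: le_trans (ler_normD _ _) _; rewrite addrC lerD2l.
rewrite [leLHS]/Num.norm /= mx_normrE; apply: bigmax_le => //= ij _.
rewrite -(@ler_pXn2r _ 2) ?nnegrE // ?sqrtr_ge0 //.
rewrite sqr_sqrtr // real_normK ?num_real //.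
case: ij => [i j] /=; rewrite (ord1 i).
apply: (le_trans _ (ler_norm c)); apply: (le_trans _ HY); exact: dotv_coord.
Unshelve. all: by end_near.
Qed.

Lemma min_on_ball (X0 : 'rV[R]_n) (c : R) (g : 'rV[R]_n -> R) :
  0 <= c -> continuous g ->
  exists2 p, dotv (p - X0) (p - X0) <= c &
    forall Y, dotv (Y - X0) (Y - X0) <= c -> g p <= g Y.
Proof.
move=> c0 cg.
have [|||p] := @EVT_min_rV R n g [set Y : 'rV[R]_n | dotv (Y - X0) (Y - X0) <= c].
- by exists X0 => /=; rewrite subrr /dotv big1 // => i _; rewrite mxE mul0r.
- exact: ballK_compact.
- exact: continuous_subspaceT.
rewrite inE => /= pK pmin; exists p => // Y HY; apply: pmin; rewrite inE; exact: HY.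
Qed.

End Top.

Section Conv.
Variables (R : realType) (n : nat).

Lemma le_of_small (a b c : R) : 0 <= c ->
  (forall s, 0 < s -> s <= 1 -> a <= b + s * c) -> a <= b.
Proof.
move=> c0 H; rewrite leNgt; apply/negP => ab.
have c1 : 0 < c + 1 by lra.
case: (leP ((a - b) / (c + 1)) 1) => hs.
  have s0 : 0 < (a - b) / (c + 1) by apply: divr_gt0; lra.
  have := H _ s0 hs.
  have e : (a - b) / (c + 1) * (c + 1) = a - b by rewrite mulfVK // gt_eqF.
  nra.
have := H 1 ltr01 (lexx _).
have : c + 1 < a - b by move: hs; rewrite ltr_pdivlMr // mul1r.
lra.
Qed.

Lemma comb_sub (X0 Y p : 'rV[R]_n) (s : R) :
  s *: Y + (1 - s) *: p - X0 = (p - X0) + s *: (Y - p).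
Proof. by apply/matrixP => i j; rewrite !mxE; ring. Qed.

Lemma comb_sub2 (X0 Y p : 'rV[R]_n) (s : R) :
  s *: Y + (1 - s) *: p - X0 = s *: (Y - X0) + (1 - s) *: (p - X0).
Proof. by apply/matrixP => i j; rewrite !mxE; ring. Qed.

Lemma ballK_convex (X0 Y p : 'rV[R]_n) (c s : R) :
  dotv (Y - X0) (Y - X0) <= c -> dotv (p - X0) (p - X0) <= c ->
  0 <= s -> s <= 1 ->
  dotv (s *: Y + (1 - s) *: p - X0) (s *: Y + (1 - s) *: p - X0) <= c.
Proof.
move=> hY hp s0 s1; rewrite comb_sub2 dotv_sq !dotvZl !dotvZr.
have := @dotv_cs R n 1 (Y - X0) (p - X0) ltr01; rewrite invr1 !mul1r => cs.
have ss : 0 <= s * (1 - s) by apply: mulr_ge0; lra.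
have := ler_wpM2l ss cs.
set qa := dotv (Y - X0) (Y - X0); set qb := dotv (p - X0) (p - X0).
set d := dotv (Y - X0) (p - X0).
move=> H.
have -> : s * (s * qa) + 2 * (s * ((1 - s) * d)) + (1 - s) * ((1 - s) * qb)
  = s * s * qa + s * (1 - s) * (2 * d) + (1 - s) * (1 - s) * qb by ring.
have : s * s * qa + s * (1 - s) * (qa + qb) + (1 - s) * (1 - s) * qb
   = s * qa + (1 - s) * qb => [|E]; first by ring.
have h1 : s * qa <= s * c by apply: ler_wpM2l.
have h2 : (1 - s) * qb <= (1 - s) * c by apply: ler_wpM2l => //; rewrite subr_ge0.
lra.
Qed.

Variable f : 'rV[R]_n -> R.
Hypothesis fconv : convex_fun f.

Definition qd (X0 Y : 'rV[R]_n) := dotv (Y - X0) (Y - X0).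

Lemma var_ineq (X0 p : 'rV[R]_n) (c t : R) : 0 < t ->
  qd X0 p <= c ->
  (forall Y, qd X0 Y <= c -> t * f p + qd X0 p / 2 <= t * f Y + qd X0 Y / 2) ->
  forall Y, qd X0 Y <= c -> dotv (X0 - p) (Y - p) <= t * (f Y - f p).
Proof.
move=> t0 Kp pmin Y KY.
apply: (@le_of_small _ _ (dotv (Y - p) (Y - p) / 2)).
  by apply: divr_ge0 => //; exact: dotv_ge0.
move=> s s0 s1.
have KZ := @ballK_convex X0 Y p c s KY Kp (ltW s0) s1.
have := pmin _ KZ; rewrite /qd comb_sub (@dotv_sq _ _ (p - X0)) dotvZl !dotvZr.
have cv := fconv Y p s (ltW s0) s1.
have := ler_wpM2l (ltW t0) cv.
have -> : X0 - p = - (p - X0) by rewrite opprB.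
rewrite dotvNl.
set fZ := f _; set D := dotv (p - X0) (Y - p); set Q := dotv (Y - p) (Y - p).
set qu := dotv (p - X0) (p - X0).
move=> h1 h2.
have h3 : s * (t * (f p - f Y)) <= s * (D + s * Q / 2) by nra.
have := h3; rewrite ler_pM2l //. lra.
Qed.

Lemma local_to_global (X0 p d : 'rV[R]_n) (c : R) :
  qd X0 p < c ->
  (forall Y, qd X0 Y <= c -> f p + dotv d (Y - p) <= f Y) ->
  subgradient f p d.
Proof.
move=> Kp H Y.
set u := p - X0; set w := Y - p.
set M := 2 * `|dotv u w| + dotv w w + 1.
have M0 : 0 < M by have := @dotv_ge0 _ _ w; have := normr_ge0 (dotv u w); rewrite /M; lra.
set s := Num.min 1 ((c - qd X0 p) / M).
have s0 : 0 < s by rewrite /s lt_min ltr01 /= divr_gt0 // subr_gt0.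
have s1 : s <= 1 by rewrite /s ge_min lexx.
have sM : s * M <= c - qd X0 p.
  by rewrite -ler_pdivlMr // /s ge_min lexx orbT.
have KZ : qd X0 (s *: Y + (1 - s) *: p) <= c.
  rewrite /qd comb_sub dotv_sq dotvZr !dotvZl dotvZr -/u -/w.
  have := ler_norm (dotv u w); have := @dotv_ge0 _ _ w; move: sM; rewrite /M /qd -/u.
  move=> hM hw hd.
  have e1 : s * (s * dotv w w) <= 1 * (s * dotv w w).
    by apply: ler_wpM2r => //; apply: mulr_ge0 => //; exact: ltW.
  have e2 : s * dotv u w <= s * `|dotv u w| by apply: ler_wpM2l => //; exact: ltW.
  lra.
have := H _ KZ.
have -> : s *: Y + (1 - s) *: p - p = s *: w by apply/matrixP => i j; rewrite !mxE; ring.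
rewrite dotvZr => h.
have := fconv Y p s (ltW s0) s1 => h2.
have h3 : s * dotv d w <= s * (f Y - f p) by lra.
move: h3; rewrite ler_pM2l // -/w; lra.
Qed.


Lemma qd_ge0 (X0 Y : 'rV[R]_n) : 0 <= qd X0 Y.
Proof. exact: dotv_ge0. Qed.

Lemma qdXX (X0 : 'rV[R]_n) : qd X0 X0 = 0.
Proof. by rewrite /qd subrr /dotv big1 // => i _; rewrite mxE mul0r. Qed.

Lemma qdC (X Y : 'rV[R]_n) : qd X Y = qd Y X.
Proof. by rewrite /qd -opprB dotvNN. Qed.

Lemma strong_min (X0 p Y : 'rV[R]_n) (c t : R) : 0 < t ->
  qd X0 p <= c ->
  (forall Y, qd X0 Y <= c -> t * f p + qd X0 p / 2 <= t * f Y + qd X0 Y / 2) ->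
  qd X0 Y <= c ->
  t * f p + qd X0 p / 2 + qd p Y / 2 <= t * f Y + qd X0 Y / 2.
Proof.
move=> t0 Kp pm KY.
have := @var_ineq X0 p c t t0 Kp pm Y KY.
rewrite /qd.
have -> : Y - X0 = (Y - p) + (p - X0) by rewrite addrA subrK.
have -> : X0 - p = - (p - X0) by rewrite opprB.
rewrite dotvNl (dotv_sq (Y - p)) (dotvC (p - X0)).
lra.
Qed.



Lemma est1 (X0 a b : 'rV[R]_n) (lam : R) : 0 < lam ->
  `|qd X0 a - qd X0 b| <= lam * qd X0 b + qd b a * (lam^-1 + 1).
Proof.
move=> l0; rewrite /qd.
have -> : a - X0 = (b - X0) + (a - b) by apply/matrixP => i j; rewrite !mxE; ring.
rewrite dotv_sq.
have h1 := dotv_cs lam (b - X0) (a - b) l0.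
have h2 := dotv_csN lam (b - X0) (a - b) l0.
have h3 := dotv_ge0 (a - b).
rewrite ler_norml; apply/andP; split; lra.
Qed.

Lemma est2 (X0 : 'rV[R]_n) (c s t : R) (P : R -> 'rV[R]_n) :
  0 < s -> 0 < t ->
  (forall t, 0 < t -> qd X0 (P t) <= c /\ forall Y, qd X0 Y <= c ->
     t * f (P t) + qd X0 (P t) / 2 <= t * f Y + qd X0 Y / 2) ->
  qd (P s) (P t) * (t + s) <= (t - s) * (qd X0 (P t) - qd X0 (P s)).
Proof.
move=> s0 t0 HP.
have [Ks ms] := HP s s0; have [Kt mt] := HP t t0.
have h1 := @strong_min X0 (P s) (P t) c s s0 Ks ms Kt.
have h2 := @strong_min X0 (P t) (P s) c t t0 Kt mt Ks.
rewrite (qdC (P t)) in h2.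
have h1' := ler_wpM2l (ltW t0) h1.
have h2' := ler_wpM2l (ltW s0) h2.
lra.
Qed.

Lemma G_cont (X0 : 'rV[R]_n) (c a0 : R) (P : R -> 'rV[R]_n) : 0 < a0 -> 0 <= c ->
  (forall t, 0 < t -> qd X0 (P t) <= c /\ forall Y, qd X0 Y <= c ->
     t * f (P t) + qd X0 (P t) / 2 <= t * f Y + qd X0 Y / 2) ->
  continuous (fun x => qd X0 (P (Num.max x a0))).
Proof.
move=> a00 c0 HP x; apply/cvgrPdist_le => /= e e0.
set lam := e / (2 * c + 1).
have c1 : 0 < 2 * c + 1 by lra.
have lam0 : 0 < lam by rewrite divr_gt0.
have elam : lam * (2 * c + 1) = e by rewrite /lam mulfVK // gt_eqF.
have li0 : 0 < lam^-1 + 1 by rewrite ltr_wpDl // invr_ge0 ltW.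
set eta := e / (2 * (lam^-1 + 1)).
have eta0 : 0 < eta by rewrite divr_gt0 // mulr_gt0.
have eeta : eta * (2 * (lam^-1 + 1)) = e by rewrite /eta mulfVK // gt_eqF // mulr_gt0.
set del := eta * a0 / (c + 1).
have c1' : 0 < c + 1 by lra.
have del0 : 0 < del by rewrite divr_gt0 // mulr_gt0.
have edel : del * (c + 1) = eta * a0 by rewrite /del mulfVK // gt_eqF.
apply/nbhs_ballP; exists del => // y; rewrite /ball_ /= => hxy.
set t := Num.max x a0; set s := Num.max y a0.
have ta : a0 <= t by rewrite /t le_max lexx orbT.
have sa : a0 <= s by rewrite /s le_max lexx orbT.
have hts : `|t - s| < del.
  have n1 : `|x - a0| <= `|x - y| + `|y - a0| by have := ler_normD (x - y) (y - a0); rewrite subrKA.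
  have n2 : `|y - a0| <= `|x - y| + `|x - a0|.
    by have := ler_normD (y - x) (x - a0); rewrite subrKA (distrC y x).
  move: hxy; rewrite /t /s !maxr_absE => hxy.
  have : `|x - y| < del by [].
  rewrite !ltr_norml => /andP [h1 h2]; apply/andP; split; lra.
have t0 : 0 < t by exact: (lt_le_trans a00 ta).
have s0 : 0 < s by exact: (lt_le_trans a00 sa).
have [Kt _] := HP t t0; have [Ks _] := HP s s0.
have E2 := @est2 X0 c s t P s0 t0 HP.
have E1 := @est1 X0 (P t) (P s) lam lam0.
set A := qd X0 (P t) in E1 E2 Kt *; set B := qd X0 (P s) in E1 E2 Ks *.
set D := qd (P s) (P t) in E1 E2 *.
have A0 : 0 <= A := qd_ge0 _ _.
have B0 : 0 <= B := qd_ge0 _ _.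
have D0 : 0 <= D := qd_ge0 _ _.
have hAB : `|A - B| <= c by rewrite ler_norml; apply/andP; split; lra.
have h3 : (t - s) * (A - B) <= `|t - s| * c.
  apply: le_trans (ler_norm _) _; rewrite normrM.
  by apply: ler_wpM2l.
have h4 : D * a0 <= D * (t + s) by apply: ler_wpM2l => //; lra.
have h5 : `|t - s| * c <= del * c by apply: ler_wpM2r => //; exact: ltW.
have h6 : del * c <= del * (c + 1) by apply: ler_wpM2l; [exact: ltW | lra].
have h7 : D * a0 <= eta * a0 by lra.
have h8 : D <= eta by move: h7; rewrite ler_pM2r.
have h9 : D * (lam^-1 + 1) <= eta * (lam^-1 + 1) by apply: ler_wpM2r => //; exact: ltW.
have h10 : lam * B <= lam * c by apply: ler_wpM2l => //; exact: ltW.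
have h11 : lam * c <= e / 2.
  have : 0 <= lam by exact: ltW.
  have : lam * (2 * c) <= e by rewrite -elam; apply: ler_wpM2l; [exact: ltW | lra].
  lra.
have h12 : eta * (lam^-1 + 1) = e / 2 by rewrite -eeta; field; rewrite gt_eqF.
lra.
Qed.


Lemma main_res (X0 : 'rV[R]_n) (r dl : R) : continuous f -> 0 < r -> 0 < dl ->
  (forall X d : 'rV[R]_n, in_open_ball X0 r X -> subgradient f X d -> dl <= enorm d) ->
  exists X d : 'rV[R]_n,
    [/\ in_open_ball X0 r X, subgradient f X d &
        X - X0 = - ((r / 2) *: ((enorm d)^-1 *: d))].
Proof.
move=> fcont r0 dl0 Hdl.
set rho := r / 2; set c := (r * 3 / 4) ^+ 2.
have rho0 : 0 < rho by rewrite divr_gt0.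
have rhor : rho < r by rewrite /rho; lra.
have rhoc : rho ^+ 2 < c.
  rewrite /c /rho expr2 expr2; nra.
have c0 : 0 <= c by rewrite /c sqr_ge0.
pose phi t Y := t * f Y + qd X0 Y / 2.
have phic : forall t, continuous (phi t).
  move=> t Y.
  apply: (@continuousD R R^o _ (fun Y => t * f Y) (fun Y => qd X0 Y / 2) Y).
    exact: (@continuousM R _ (fun=> t) f Y (@cst_continuous _ _ t Y) (fcont Y)).
  have h1 : {for Y, continuous (fun Y => qd X0 Y)} := @dotv_continuous R n X0 Y.
  have h2 : {for Y, continuous (fun=> (2^-1 : R))} := @cst_continuous _ _ (2^-1 : R) Y.
  exact: (continuousM h1 h2).
have Pex : forall t, exists p, 0 < t -> qd X0 p <= c /\
    forall Y, qd X0 Y <= c -> t * f p + qd X0 p / 2 <= t * f Y + qd X0 Y / 2.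
  move=> t; have [p Kp pm] := @min_on_ball R n X0 c (phi t) c0 (phic t).
  by exists p => _; split.
have [P HP] := choice Pex.
have Psub : forall t, 0 < t -> qd X0 (P t) < c ->
    subgradient f (P t) (t^-1 *: (X0 - P t)).
  move=> t t0 hc; have [Kp pm] := HP t t0.
  apply: (@local_to_global X0 (P t) _ c hc) => Y KY.
  have := @var_ineq X0 (P t) c t t0 Kp pm Y KY.
  rewrite dotvZl => h.
  have : t^-1 * dotv (X0 - P t) (Y - P t) <= t^-1 * (t * (f Y - f (P t))).
    by apply: ler_wpM2l => //; rewrite invr_ge0 ltW.
  rewrite mulKf ?gt_eqF //; lra.
have [pm Kpm pmm] := @min_on_ball R n X0 c f c0 fcont.
have K0 : qd X0 X0 <= c by rewrite qdXX.
have Cf0 : 0 <= f X0 - f pm by have := pmm X0 K0; lra.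
have Pbd : forall t, 0 < t -> qd X0 (P t) <= 2 * t * (f X0 - f pm).
  move=> t t0; have [Kp pm'] := HP t t0.
  have := pm' X0 K0; rewrite qdXX.
  have := pmm _ Kp => h1 h2.
  have : 0 <= t * (f (P t) - f pm) by apply: mulr_ge0; [exact: ltW | lra].
  lra.
set t1 := 2 * rho / dl.
have t10 : 0 < t1 by rewrite divr_gt0 // mulr_gt0.
have enP : forall t, enorm (X0 - P t) = Num.sqrt (qd X0 (P t)).
  by move=> t; rewrite /enorm -opprB dotvNN.
have Ht1 : rho ^+ 2 < qd X0 (P t1).
  rewrite ltNge; apply/negP => hq.
  have hc : qd X0 (P t1) < c by exact: (le_lt_trans hq rhoc).
  have sg := Psub t1 t10 hc.
  have hs : Num.sqrt (qd X0 (P t1)) <= rho.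
    by rewrite -(ger0_norm (ltW rho0)) -sqrtr_sqr; exact: ler_wsqrtr.
  have inb : in_open_ball X0 r (P t1) by rewrite /in_open_ball; exact: (le_lt_trans hs rhor).
  have := Hdl _ _ inb sg.
  rewrite enormZ enP ger0_norm; last by rewrite invr_ge0 ltW.
  move=> h0.
  have h1 : t1^-1 * Num.sqrt (qd X0 (P t1)) <= t1^-1 * rho.
    by apply: ler_wpM2l => //; rewrite invr_ge0 ltW.
  have h2 : t1^-1 * rho = dl / 2 by rewrite /t1; field; rewrite !gt_eqF.
  lra.
set Cf := f X0 - f pm in Cf0 Pbd.
set t0 := rho ^+ 2 / (2 * Cf + 1).
have t00 : 0 < t0 by rewrite divr_gt0 ?exprn_gt0 //; lra.
have et0 : t0 * (2 * Cf + 1) = rho ^+ 2 by rewrite /t0 mulfVK // gt_eqF //; lra.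
set a0 := Num.min t0 t1.
have a00 : 0 < a0 by rewrite /a0 lt_min t00.
have a0t1 : a0 <= t1 by rewrite /a0 ge_min lexx orbT.
have a0t0 : a0 <= t0 by rewrite /a0 ge_min lexx.
have Ha0 : qd X0 (P a0) < rho ^+ 2.
  have := Pbd a0 a00.
  have : a0 * Cf <= t0 * Cf by apply: ler_wpM2r.
  lra.
have Gc := @G_cont X0 c a0 P a00 c0 HP.
set G := fun x => qd X0 (P (Num.max x a0)) in Gc.
have Ga0 : G a0 = qd X0 (P a0) by rewrite /G maxr_absE subrr normr0 addr0; congr (qd X0 (P _)); field.
have Gt1 : G t1 = qd X0 (P t1).
  have ht : 0 <= t1 - a0 by rewrite subr_ge0.
  by rewrite /G maxr_absE (ger0_norm ht); congr (qd X0 (P _)); field.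
have hv : Num.min (G a0) (G t1) <= rho ^+ 2 <= Num.max (G a0) (G t1).
  rewrite Ga0 Gt1 ge_min le_max; apply/andP; split; apply/orP; [left|right]; exact: ltW.
have [cc ccI Gcc] := @IVT R G a0 t1 (rho ^+ 2) a0t1 (continuous_subspaceT Gc) hv.
set tt := Num.max cc a0 in Gcc.
have tt0 : 0 < tt.
  rewrite /tt maxr_absE; have := normr_ge0 (cc - a0); have := ler_norm (a0 - cc).
  rewrite distrC; move: ccI; rewrite in_itv /= => /andP [h1 h2]; lra.
have Gtt : qd X0 (P tt) = rho ^+ 2 by exact: Gcc.
have hcc : qd X0 (P tt) < c by rewrite Gtt.
have sg := Psub tt tt0 hcc.
exists (P tt), (tt^-1 *: (X0 - P tt)); split => //.
  rewrite /in_open_ball /enorm -/(qd X0 (P tt)) Gtt sqrtr_sqr ger0_norm //; exact: ltW.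
have en : enorm (tt^-1 *: (X0 - P tt)) = tt^-1 * rho.
  by rewrite enormZ enP Gtt sqrtr_sqr !ger0_norm ?invr_ge0 // ltW.
rewrite en -/rho; apply/matrixP => i j; rewrite !mxE; field.
by rewrite !gt_eqF.
Qed.

End Conv.

Theorem lemma2p2 (R : realType) (n : nat) (f : 'rV[R]_n -> R)
  (X0 : 'rV[R]_n) (r : R) :
  convex_fun f -> continuous f -> 0 < r ->
  (exists dl : R, 0 < dl /\
     forall X d : 'rV[R]_n, in_open_ball X0 r X -> subgradient f X d ->
       dl <= enorm d) ->
  exists X d : 'rV[R]_n,
    [/\ in_open_ball X0 r X, subgradient f X d &
        X - X0 = - ((r / 2) *: ((enorm d)^-1 *: d))].
Proof.
move=> fconv fcont r0 [dl [dl0 Hdl]].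
exact: (@main_res R n f fconv X0 r dl fcont r0 dl0 Hdl).
Qed.
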